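(* Let $\mathcal H$ be a Hilbert space of finite dimension $d$ and $\mathcal K$ a finite-dimensional Hilbert space. Let $\{M_j\}_{j=1}^d$ be positive operators on $\mathcal H$ with $M_j>0$ and $\sum_{j=1}^dM_j=I_{\mathcal H}$, let $\{|e_j\rangle\}_{j=1}^d$ be an orthonormal basis of $\mathcal H$, and let $\Phi$ be the quantum-classical channel $\Phi(\sigma)=\sum_{j=1}^d\mathrm{Tr}(M_j\sigma)|e_j\rangle\langle e_j|$. Then for every quantum channel $\Omega:\mathfrak S(\mathcal K)\to\mathfrak S(\mathcal K)$ and every $\rho\in\mathfrak S(\mathcal H\otimes\mathcal K)$, $$H_{\Phi\otimes\Omega}(\rho)\ge H_\Phi(\mathrm{Tr}_{\mathcal K}(\rho))+H_\Omega(\mathrm{Tr}_{\mathcal H}(\rho)).$$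
   Context: $\mathfrak S(\cdot)$ denotes the set of density operators; a quantum channel is a completely positive trace-preserving linear map; $S(\sigma)=-\mathrm{Tr}(\sigma\log\sigma)$ is the von Neumann entropy. For a channel $\Psi$ with input space $\mathcal L$ and $\sigma\in\mathfrak S(\mathcal L)$, $H_\Psi(\sigma):=\min\sum_{j}\pi_jS(\Psi(\sigma_j))$, the minimum over all finite decompositions $\sigma=\sum_j\pi_j\sigma_j$ with $\{\pi_j\}$ a probability distribution and $\sigma_j\in\mathfrak S(\mathcal L)$. *)

(* Defs.v *)
From mathcomp Require Import all_boot all_algebra.
From mathcomp Require Import boolp classical_sets reals exp.
From mathcomp Require Import complex mxtens.

Set Implicit Arguments.
Unset Strict Implicit.
Unset Printing Implicit Defensive.

Import GRing.Theory Num.Theory.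
Local Open Scope ring_scope.

Section QDefs.
Variable R : realType.
Local Notation C := R[i].

Definition adjmx (m n : nat) (A : 'M[C]_(m, n)) : 'M[C]_(n, m) :=
  (map_mx Num.conj A)^T.

Definition psdmx (n : nat) (A : 'M[C]_n) : Prop :=
  forall v : 'cV[C]_n, 0 <= (adjmx v *m A *m v) 0 0.

Definition pdmx (n : nat) (A : 'M[C]_n) : Prop :=
  forall v : 'cV[C]_n, v != 0 -> 0 < (adjmx v *m A *m v) 0 0.

Definition density (n : nat) (A : 'M[C]_n) : Prop :=
  psdmx A /\ \tr A = 1.

Definition linmap (m n : nat) (f : 'M[C]_m -> 'M[C]_n) : Prop :=
  forall (a : C) (x y : 'M[C]_m), f (a *: x + y) = a *: f x + f y.

(* tensor product of two (linear) maps, defined on the product basis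
   E_ij (x) E_ab of 'M_(m1*m2), using mxtens_index (i,a) for |i> (x) |a> *)
Definition tensmap (m1 n1 m2 n2 : nat)
  (f : 'M[C]_m1 -> 'M[C]_n1) (g : 'M[C]_m2 -> 'M[C]_n2)
  (X : 'M[C]_(m1 * m2)) : 'M[C]_(n1 * n2) :=
  \sum_(i < m1) \sum_(j < m1) \sum_(a < m2) \sum_(b < m2)
     X (mxtens_index (i, a)) (mxtens_index (j, b))
       *: (f (delta_mx i j) *t g (delta_mx a b)).

Definition compos (m n : nat) (f : 'M[C]_m -> 'M[C]_n) : Prop :=
  forall (p : nat) (X : 'M[C]_(p * m)),
    psdmx X -> psdmx (tensmap (@id 'M[C]_p) f X).

Definition tracepres (m n : nat) (f : 'M[C]_m -> 'M[C]_n) : Prop :=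
  forall X : 'M[C]_m, \tr (f X) = \tr X.

Definition qchannel (m n : nat) (f : 'M[C]_m -> 'M[C]_n) : Prop :=
  [/\ linmap f, compos f & tracepres f].

Definition eigvals (n : nat) (A : 'M[C]_n) : seq C :=
  xget [::] [set rs : seq C | char_poly A = \prod_(r <- rs) ('X - r%:P)].

(* von Neumann entropy S(s) = - Tr (s log s) = - sum_l l ln l, with 0 ln 0 = 0
   (ln 0 = 0 in mathcomp-analysis); natural logarithm *)
Definition vN_entropy (n : nat) (A : 'M[C]_n) : R :=
  - \sum_(l <- eigvals A) complex.Re l * ln (complex.Re l).

(* H_Psi(sigma) = min over finite decompositions sigma = sum_j pi_j sigma_j of
   sum_j pi_j S(Psi(sigma_j)); stated as the infimum (the min is attained) *)
Definition Hchan (m n : nat) (Psi : 'M[C]_m -> 'M[C]_n) (s : 'M[C]_m) : R :=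
  inf [set x : R | exists (N : nat) (pi : 'I_N -> R) (sj : 'I_N -> 'M[C]_m),
        [/\ forall j, 0 <= pi j,
            \sum_(j < N) pi j = 1,
            forall j, density (sj j),
            s = \sum_(j < N) (Complex (pi j) 0) *: sj j &
            x = \sum_(j < N) pi j * vN_entropy (Psi (sj j))]].

Definition ptraceK (d k : nat) (X : 'M[C]_(d * k)) : 'M[C]_d :=
  \matrix_(i, j) \sum_(a < k) X (mxtens_index (i, a)) (mxtens_index (j, a)).

Definition ptraceH (d k : nat) (X : 'M[C]_(d * k)) : 'M[C]_k :=
  \matrix_(a, b) \sum_(i < d) X (mxtens_index (i, a)) (mxtens_index (i, b)).

Definition qcmap (d : nat) (M : 'I_d -> 'M[C]_d) (e : 'I_d -> 'cV[C]_d)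
  (s : 'M[C]_d) : 'M[C]_d :=
  \sum_(j < d) \tr (M j *m s) *: (e j *m adjmx (e j)).

End QDefs.

(* Main.v *)
Require Import Defs.
From mathcomp Require Import all_boot all_algebra.
From mathcomp Require Import boolp classical_sets reals exp.
From mathcomp Require Import complex mxtens.
From mathcomp Require Import spectral sesquilinear mxred.
From mathcomp Require Import ring lra.
Import GRing.Theory Num.Theory.
Local Open Scope ring_scope.
Local Open Scope complex_scope.
Local Open Scope ring_scope.

Set Implicit Arguments.
Unset Strict Implicit.
Unset Printing Implicit Defensive.

Section Helpers.
Variable R : realType.
Local Notation C := (R[i]).
Lemma adjmxE m n (A : 'M[C]_(m, n)) : adjmx A = (A ^t*)%sesqui.
Proof. by rewrite /adjmx map_trmx. Qed.

Lemma adjmxK m n (A : 'M[C]_(m, n)) : adjmx (adjmx A) = A.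
Proof. by apply/matrixP => i j; rewrite !mxE conjCK. Qed.

Lemma adjmx_mul m n p (A : 'M[C]_(m, n)) (B : 'M[C]_(n, p)) :
  adjmx (A *m B) = adjmx B *m adjmx A.
Proof.
apply/matrixP => i j; rewrite !mxE rmorph_sum; apply: eq_bigr => l _.
by rewrite !mxE rmorphM mulrC.
Qed.

Lemma adjmxD m n (A B : 'M[C]_(m, n)) : adjmx (A + B) = adjmx A + adjmx B.
Proof. by apply/matrixP => i j; rewrite !mxE rmorphD. Qed.

Lemma adjmxZ m n (c : C) (A : 'M[C]_(m, n)) : adjmx (c *: A) = c^* *: adjmx A.
Proof. by apply/matrixP => i j; rewrite !mxE rmorphM. Qed.

Lemma adjmx1 n : adjmx (1%:M : 'M[C]_n) = 1%:M.
Proof. by apply/matrixP => i j; rewrite !mxE rmorphMn rmorph1 eq_sym. Qed.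

Lemma adjmx_delta m n (i : 'I_m) (j : 'I_n) :
  adjmx (delta_mx i j : 'M[C]_(m, n)) = delta_mx j i.
Proof.
apply/matrixP => a b; rewrite !mxE.
by case: (b == i); case: (a == j); rewrite /= ?rmorph1 ?rmorph0.
Qed.

Lemma psd_row n (A : 'M[C]_n) (u : 'rV[C]_n) :
  psdmx A -> 0 <= (u *m A *m adjmx u) 0 0.
Proof. by move=> /(_ (adjmx u)); rewrite adjmxK. Qed.

Lemma qf_delta n (A : 'M[C]_n) p q :
  (adjmx (delta_mx p 0 : 'cV[C]_n) *m A *m (delta_mx q 0 : 'cV[C]_n)) 0 0 = A p q.
Proof.
by rewrite adjmx_delta -rowE -colE !mxE.
Qed.

Lemma qf_deltaM n (A : 'M[C]_n) p q :
  adjmx (delta_mx p 0 : 'cV[C]_n) *m A *m (delta_mx q 0 : 'cV[C]_n) = (A p q)%:M.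
Proof. by apply/matrixP => a b; rewrite !ord1 -qf_delta !mxE eqxx mulr1n. Qed.

Lemma qf_real n (A : 'M[C]_n) (v : 'cV[C]_n) : psdmx A ->
  ((adjmx v *m A *m v) 0 0)^* = (adjmx v *m A *m v) 0 0.
Proof. by move=> /(_ v) /ger0_real /CrealP. Qed.

Lemma psd_herm n (A : 'M[C]_n) : psdmx A -> adjmx A = A.
Proof.
move=> psdA; apply/matrixP => i j; rewrite !mxE.
have ereal p : (A p p)^* = A p p by rewrite -qf_delta qf_real.
have [->|nij] := eqVneq j i; first exact: ereal.
pose Q (c : C) := (adjmx (delta_mx i 0 + c *: delta_mx j 0 : 'cV[C]_n) *m A
   *m (delta_mx i 0 + c *: delta_mx j 0 : 'cV[C]_n)) 0 0.
have QE (c : C) : Q c = A i i + c * A i j + c^* * A j i + c^* * c * A j j.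
  rewrite /Q adjmxD adjmxZ !mulmxDl !mulmxDr -!scalemxAl -!scalemxAr !qf_deltaM !mxE !eqxx !mulr1n.
  ring.
have Qr (c : C) : (Q c)^* = Q c by rewrite /Q qf_real.
have h1 := Qr 1; rewrite QE !rmorphD !rmorphM /= ?rmorph1 ?conjCK !ereal in h1.
have h2 := Qr 'i; rewrite QE !rmorphD !rmorphM /= ?conjCK !ereal ?conjCi in h2.
have e : 2 * ((A j i)^* - A i j) = 0.
  have ii : 'i * 'i = -1 :> C by rewrite -expr2 sqrCi.
  have -> : 2 * ((A j i)^* - A i j) =
     ((A i i + 1 * (A i j)^* + 1 * (A j i)^* + 1 * 1 * A j j) -
       (A i i + 1 * A i j + 1 * A j i + 1 * 1 * A j j)) -
     'i * ((A i i + - 'i * (A i j)^* + 'i * (A j i)^* + 'i * - 'i * A j j) -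
       (A i i + 'i * A i j + - 'i * A j i + - 'i * 'i * A j j))
     - ('i * 'i + 1) * ((A i j)^* - (A j i)^* + A i j - A j i) by ring.
  by rewrite h1 h2 ii !subrr mulr0 subr0 addNr mul0r subr0.
by apply/eqP; move: e => /eqP; rewrite mulf_eq0 pnatr_eq0 /= subr_eq0.
Qed.
Lemma entry_rowcol m n p (A : 'M[C]_(m, n)) (B : 'M[C]_(n, p)) i j :
  (A *m B) i j = (row i A *m col j B) 0 0.
Proof. by rewrite !mxE; apply: eq_bigr => l _; rewrite !mxE. Qed.

Lemma col_adjmx m n (A : 'M[C]_(m, n)) i : col i (adjmx A) = adjmx (row i A).
Proof. by apply/matrixP => a b; rewrite !mxE. Qed.

Lemma conj_diag n (X A : 'M[C]_n) i :
  (X *m A *m adjmx X) i i = (row i X *m A *m adjmx (row i X)) 0 0.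
Proof. by rewrite [LHS]entry_rowcol row_mul col_adjmx. Qed.

Lemma psd_spec n (A : 'M[C]_n) : psdmx A -> exists (P : 'M[C]_n) (lam : 'rV[C]_n),
  [/\ P *m adjmx P = 1%:M, adjmx P *m P = 1%:M,
      A = adjmx P *m diag_mx lam *m P & forall i, 0 <= lam 0 i].
Proof.
move=> psdA; have hA := psd_herm psdA.
have nA : A \is normalmx by apply/normalmxP; rewrite -adjmxE hA.
have /orthomx_spectralP eA := nA.
set P := spectralmx A in eA; set lam := spectral_diag A in eA.
have uP : P *m adjmx P = 1%:M.
  by rewrite adjmxE; apply/unitarymxP; apply: spectral_unitarymx.
have uP' : adjmx P *m P = 1%:M by apply: mulmx1C.
have iP : invmx P = adjmx P.
  by rewrite adjmxE invmx_unitary //; apply: spectral_unitarymx.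
rewrite iP in eA.
exists P, lam; split => // i.
have : (P *m A *m adjmx P) i i = lam 0 i.
  rewrite eA !mulmxA uP mul1mx -mulmxA uP mulmx1 !mxE eqxx mulr1n //.
by move=> <-; rewrite conj_diag; apply: psd_row.
Qed.

Lemma mxtrace_diag_mul n (lam : 'rV[C]_n) (B : 'M[C]_n) :
  \tr (diag_mx lam *m B) = \sum_i lam 0 i * B i i.
Proof. by rewrite mul_diag_mx /mxtrace; apply: eq_bigr => i _; rewrite mxE. Qed.

Lemma trpos n (M Y : 'M[C]_n) : psdmx M -> psdmx Y -> 0 <= \tr (M *m Y).
Proof.
move=> /psd_spec [P [lam [u1 u2 -> lam0]]] psdY.
rewrite -!mulmxA mxtrace_mulC !mulmxA -2![X in \tr X]mulmxA.
rewrite mxtrace_diag_mul; apply: sumr_ge0 => i _; apply: mulr_ge0 => //.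
by rewrite mulmxA conj_diag; apply: psd_row.
Qed.

Lemma psd_tr0 n (A : 'M[C]_n) : psdmx A -> \tr A = 0 -> A = 0.
Proof.
move=> /psd_spec [P [lam [u1 u2 eA lam0]]] tr0.
have : \tr (diag_mx lam) = 0.
  by rewrite -tr0 eA mxtrace_mulC mulmxA u1 mul1mx.
rewrite /mxtrace => s0.
have l0 : lam = 0.
  apply/matrixP => a b; rewrite ord1 mxE.
  have := @psumr_eq0P _ _ xpredT (fun i => (diag_mx lam) i i).
  move=> /(_ _ s0 b isT); rewrite mxE eqxx mulr1n //.
  by apply; move=> i _; rewrite mxE eqxx mulr1n.
have dl : diag_mx lam = 0 by apply/matrixP => a b; rewrite !mxE l0 mxE mul0rn.
by rewrite eA dl mulmx0 mul0mx.
Qed.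

Lemma qfE n (A : 'M[C]_n) (v : 'cV[C]_n) :
  (adjmx v *m A *m v) 0 0 = \sum_i \sum_j (v i 0)^* * A i j * v j 0.
Proof.
rewrite mxE (eq_bigr (fun j => (\sum_i (v i 0)^* * A i j) * v j 0)); last first.
  by move=> j _; rewrite !mxE; congr (_ * _); apply: eq_bigr => i _; rewrite !mxE.
rewrite exchange_big /=; apply: eq_bigr => i _.
by rewrite mulr_suml; apply: eq_bigr => j _.
Qed.

Lemma psdD n (A B : 'M[C]_n) : psdmx A -> psdmx B -> psdmx (A + B).
Proof.
by move=> pA pB v; rewrite mulmxDr mulmxDl mxE addr_ge0 //.
Qed.

Lemma psdZ n (c : C) (A : 'M[C]_n) : 0 <= c -> psdmx A -> psdmx (c *: A).
Proof.
by move=> c0 pA v; rewrite -scalemxAr -scalemxAl mxE mulr_ge0.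
Qed.

Lemma psd0 n : psdmx (0 : 'M[C]_n).
Proof. by move=> v; rewrite mulmx0 mul0mx mxE. Qed.

Lemma psd_sum n (I : finType) (F : I -> 'M[C]_n) :
  (forall i, psdmx (F i)) -> psdmx (\sum_i F i).
Proof.
move=> h; elim/big_ind: _ => //; [exact: psd0 | by move=> x y; apply: psdD].
Qed.
Definition entf (z : C) : R := complex.Re z * ln (complex.Re z).

Lemma char_sim n (G G' T : 'M[C]_n) : G *m G' = 1%:M ->
  char_poly (G *m T *m G') = char_poly T.
Proof.
move=> GG; rewrite /char_poly /char_poly_mx.
set Gp := map_mx polyC G; set Gp' := map_mx polyC G'.
have GGp : Gp *m Gp' = 1%:M by rewrite -map_mxM GG map_mx1.
have -> : 'X%:M - map_mx polyC (G *m T *m G') =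
    Gp *m ('X%:M - map_mx polyC T) *m Gp'.
  rewrite !map_mxM mulmxBr mulmxBl -/Gp -/Gp' scalar_mxC.
  by rewrite -[X in _ = X - _]mulmxA GGp mulmx1.
rewrite !det_mulmx mulrC mulrA -det_mulmx.
have -> : Gp' *m Gp = 1%:M by apply: mulmx1C.
by rewrite det1 mul1r.
Qed.

Lemma vN_roots n (A : 'M[C]_n) (s : seq C) :
  char_poly A = \prod_(r <- s) ('X - r%:P) ->
  vN_entropy A = - \sum_(r <- s) entf r.
Proof.
move=> hs; rewrite /vN_entropy /eigvals.
set E := xget _ _.
have hE : char_poly A = \prod_(r <- E) ('X - r%:P).
  by rewrite /E; apply: (xgetPex [::] (P := [set rs : seq C | char_poly A = \prod_(r <- rs) ('X - r%:P)])); exists s.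
have pE : perm_eq E s by apply: prod_XsubC_eq; rewrite -hE hs.
by rewrite (perm_big _ pE).
Qed.

Lemma vN_trig n (G G' T : 'M[C]_n) : G *m G' = 1%:M -> is_trig_mx T ->
  vN_entropy (G *m T *m G') = - \sum_i entf (T i i).
Proof.
move=> GG tT; rewrite (@vN_roots _ _ [seq T i i | i <- enum 'I_n]).
  by rewrite big_map big_enum.
by rewrite char_sim // char_poly_trig // big_map big_enum.
Qed.
Lemma ge0C (z : C) : 0 <= z -> 0 <= complex.Re z /\ z = (complex.Re z)%:C.
Proof.
case: z => a b; rewrite lecE /= => /andP[/eqP b0 a0]; split => //.
by rewrite b0.
Qed.

Lemma leC (z w : C) : z <= w -> complex.Re z <= complex.Re w.
Proof. by rewrite lecE => /andP[]. Qed.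

Lemma ReD (z w : C) : complex.Re (z + w) = complex.Re z + complex.Re w.
Proof. by case: z; case: w. Qed.

Lemma Re_sum (I : Type) (r : seq I) (P : pred I) (F : I -> C) :
  complex.Re (\sum_(i <- r | P i) F i) = \sum_(i <- r | P i) complex.Re (F i).
Proof. by elim/big_rec2: _ => // i x y _ <-; rewrite ReD. Qed.

Lemma entf_le0 (z : C) : 0 <= z -> z <= 1 -> entf z <= 0.
Proof.
move=> /ge0C [h0 _] /leC h1; rewrite /entf.
by apply: mulr_ge0_le0 => //; apply: ln_le0.
Qed.

Lemma vN_psd n (A : 'M[C]_n) : psdmx A -> exists lam : 'rV[C]_n,
  [/\ vN_entropy A = - \sum_i entf (lam 0 i), forall i, 0 <= lam 0 i &
      \sum_i lam 0 i = \tr A].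
Proof.
move=> /psd_spec [P [lam [u1 u2 eA l0]]]; exists lam; split => //.
  by rewrite eA vN_trig ?diag_mx_is_trig //; congr (- _); apply: eq_bigr => i _;
     rewrite mxE eqxx mulr1n.
rewrite eA mxtrace_mulC mulmxA u1 mul1mx /mxtrace; apply: eq_bigr => i _.
by rewrite mxE eqxx mulr1n.
Qed.

Lemma vN_density_ge0 n (A : 'M[C]_n) : density A -> 0 <= vN_entropy A.
Proof.
move=> [pA trA]; have [lam [-> l0 sl]] := vN_psd pA.
rewrite oppr_ge0; apply: sumr_le0 => i _; apply: entf_le0 => //.
rewrite -trA -sl (bigD1 i) //= lerDl; apply: sumr_ge0 => j _; exact: l0.
Qed.
Lemma sum_tens {V : nmodType} m n (F : 'I_(m * n) -> V) :
  \sum_r F r = \sum_i \sum_a F (mxtens_index (i, a)).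
Proof.
rewrite (reindex (@mxtens_index m n)) /=; last first.
  by exists (@mxtens_unindex m n) => r _; [apply: mxtens_indexK | apply: mxtens_unindexK].
by rewrite pair_big /=; apply: eq_bigr => -[i a].
Qed.

Lemma tensZl m n p q (c : C) (A : 'M[C]_(m, n)) (B : 'M[C]_(p, q)) :
  (c *: A) *t B = c *: (A *t B).
Proof. by apply/matrixP => i j; rewrite !mxE mulrA. Qed.

Lemma tensZr m n p q (c : C) (A : 'M[C]_(m, n)) (B : 'M[C]_(p, q)) :
  A *t (c *: B) = c *: (A *t B).
Proof. by apply/matrixP => i j; rewrite !mxE mulrCA. Qed.

Lemma tensDl m n p q (A A' : 'M[C]_(m, n)) (B : 'M[C]_(p, q)) :
  (A + A') *t B = A *t B + A' *t B.
Proof. by apply/matrixP => i j; rewrite !mxE mulrDl. Qed.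

Lemma tensDr m n p q (A : 'M[C]_(m, n)) (B B' : 'M[C]_(p, q)) :
  A *t (B + B') = A *t B + A *t B'.
Proof. by apply/matrixP => i j; rewrite !mxE mulrDr. Qed.

Lemma tens_suml m n p q (I : finType) (F : I -> 'M[C]_(m, n)) (B : 'M[C]_(p, q)) :
  (\sum_i F i) *t B = \sum_i (F i *t B).
Proof.
elim/big_rec2: _ => [|i x y _ <-]; first by rewrite tens0mx.
by rewrite tensDl.
Qed.

Lemma tens_sumr m n p q (I : finType) (A : 'M[C]_(m, n)) (F : I -> 'M[C]_(p, q)) :
  A *t (\sum_i F i) = \sum_i (A *t F i).
Proof.
elim/big_rec2: _ => [|i x y _ <-]; first by rewrite tensmx0.
by rewrite tensDr.
Qed.

Lemma tens11 m n : (1%:M : 'M[C]_m) *t (1%:M : 'M[C]_n) = 1%:M.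
Proof.
apply/matrixP => r s; case: (mxtens_indexP r) => i a; case: (mxtens_indexP s) => j b.
rewrite tensmxE !mxE (can_eq (@mxtens_indexK m n)) xpair_eqE.
by case: (i == j); case: (a == b); rewrite ?mulr1 ?mulr0 ?mul0r.
Qed.

Lemma tr_delta n (A : 'M[C]_n) i j : \tr (A *m delta_mx i j) = A j i.
Proof.
rewrite /mxtrace (bigD1 j) //= big1 ?addr0.
  rewrite mxE (bigD1 i) //= big1 ?addr0; first by rewrite mxE !eqxx mulr1.
  by move=> l /negbTE nl; rewrite mxE nl mulr0.
move=> l /negbTE nl; rewrite mxE big1 // => x _.
by rewrite mxE nl andbF mulr0.
Qed.

Section Lin.
Variables (m n : nat) (f : 'M[C]_m -> 'M[C]_n).
Hypothesis lf : linmap f.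

Lemma lin0 : f 0 = 0.
Proof.
have h := lf 1 0 0; rewrite !scale1r addr0 in h.
by apply: (addrI (f 0)); rewrite addr0 -h.
Qed.

Lemma linD x y : f (x + y) = f x + f y.
Proof. by have := lf 1 x y; rewrite !scale1r. Qed.

Lemma linZ (c : C) x : f (c *: x) = c *: f x.
Proof. by have := lf c x 0; rewrite !addr0 lin0 addr0. Qed.

Lemma lin_sum (I : finType) (F : I -> 'M[C]_m) : f (\sum_i F i) = \sum_i f (F i).
Proof.
elim/big_rec2: _ => [|i x y _ <-]; first exact: lin0.
by rewrite linD.
Qed.

Lemma lin_expand X : f X = \sum_a \sum_b X a b *: f (delta_mx a b).
Proof.
rewrite {1}(matrix_sum_delta X) lin_sum; apply: eq_bigr => a _.
by rewrite lin_sum; apply: eq_bigr => b _; rewrite linZ.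
Qed.
End Lin.
Definition Bm d k (Ml : 'M[C]_d) (X : 'M[C]_(d * k)) : 'M[C]_k :=
  \matrix_(a, b) \sum_i \sum_j Ml j i * X (mxtens_index (i, a)) (mxtens_index (j, b)).

Lemma qcmap_delta d (M : 'I_d -> 'M[C]_d) (e : 'I_d -> 'cV[C]_d) i j :
  qcmap M e (delta_mx i j) = \sum_l (M l j i) *: (e l *m adjmx (e l)).
Proof. by apply: eq_bigr => l _; rewrite tr_delta. Qed.

Lemma tensmap_qc d k (M : 'I_d -> 'M[C]_d) (e : 'I_d -> 'cV[C]_d)
  (g : 'M[C]_k -> 'M[C]_k) : linmap g -> forall X,
  tensmap (qcmap M e) g X = \sum_l (e l *m adjmx (e l)) *t g (Bm (M l) X).
Proof.
move=> lg X; rewrite /tensmap.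
under eq_bigr => i _ do under eq_bigr => j _ do under eq_bigr => a _ do
  under eq_bigr => b _ do rewrite qcmap_delta tens_suml scaler_sumr.
under eq_bigr => i _ do under eq_bigr => j _ do under eq_bigr => a _ do rewrite exchange_big.
under eq_bigr => i _ do under eq_bigr => j _ do rewrite exchange_big.
under eq_bigr => i _ do rewrite exchange_big.
rewrite exchange_big; apply: eq_bigr => l _.
rewrite (lin_expand lg) tens_sumr.
under [RHS]eq_bigr => a _ do rewrite tens_sumr.
under [RHS]eq_bigr => a _ do under eq_bigr => b _ do rewrite tensZr mxE scaler_suml.
under [RHS]eq_bigr => a _ do under eq_bigr => b _ do under eq_bigr => i _ do rewrite scaler_suml.
under eq_bigr => i _ do rewrite exchange_big.
under eq_bigr => i _ do under eq_bigr => a _ do rewrite exchange_big.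
rewrite exchange_big.
under eq_bigr => a _ do rewrite exchange_big.
apply: eq_bigr => a _; apply: eq_bigr => b _; apply: eq_bigr => i _; apply: eq_bigr => j _.
by rewrite tensZl scalerA mulrC.
Qed.
Lemma sum_pick n (F : 'I_n -> C) a : \sum_b F b * (b == a)%:R = F a.
Proof.
rewrite (bigD1 a) //= eqxx mulr1 big1 ?addr0 // => b /negbTE ->.
by rewrite mulr0.
Qed.

Lemma sum_only {V : nmodType} n (F : 'I_n -> V) a :
  (forall b, b != a -> F b = 0) -> \sum_b F b = F a.
Proof. by move=> h; rewrite (bigD1 a) //= big1 ?addr0. Qed.

Lemma qf_tens d k (X : 'M[C]_(d * k)) (w : 'cV[C]_(d * k)) :
  (adjmx w *m X *m w) 0 0 = \sum_i \sum_a \sum_j \sum_b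
    (w (mxtens_index (i, a)) 0)^* * X (mxtens_index (i, a)) (mxtens_index (j, b))
      * w (mxtens_index (j, b)) 0.
Proof.
rewrite qfE sum_tens; apply: eq_bigr => i _; apply: eq_bigr => a _.
by rewrite sum_tens.
Qed.

Lemma tr_ptraceK d k (X : 'M[C]_(d * k)) : \tr (ptraceK X) = \tr X.
Proof.
rewrite /mxtrace sum_tens; apply: eq_bigr => i _; by rewrite mxE.
Qed.

Lemma psd_ptraceK d k (X : 'M[C]_(d * k)) : psdmx X -> psdmx (ptraceK X).
Proof.
move=> pX v.
pose w (a : 'I_k) : 'cV[C]_(d * k) :=
  \col_r (v (mxtens_unindex r).1 0 * ((mxtens_unindex r).2 == a)%:R).
have -> : (adjmx v *m ptraceK X *m v) 0 0 = \sum_a (adjmx (w a) *m X *m w a) 0 0.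
  have wE a : (adjmx (w a) *m X *m w a) 0 0 = \sum_i \sum_j
      (v i 0)^* * X (mxtens_index (i, a)) (mxtens_index (j, a)) * v j 0.
    rewrite qf_tens; apply: eq_bigr => i _.
    rewrite (sum_only (a := a)); last first.
      move=> b /negbTE nb; apply: big1 => j _; apply: big1 => b' _.
      by rewrite !mxE !mxtens_indexK /= nb mulr0 rmorph0 !mul0r.
    apply: eq_bigr => j _; rewrite (sum_only (a := a)); last first.
      by move=> b /negbTE nb; rewrite !mxE !mxtens_indexK /= nb mulr0 mulr0.
    by rewrite !mxE !mxtens_indexK /= eqxx !mulr1.
  under [RHS]eq_bigr => a _ do rewrite wE.
  rewrite qfE [RHS]exchange_big; apply: eq_bigr => i _; rewrite exchange_big.
  apply: eq_bigr => j _; rewrite mxE mulr_sumr mulr_suml.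
  by apply: eq_bigr => a _; ring.
by apply: sumr_ge0 => a _; apply: pX.
Qed.
Lemma tr_Bm d k (Ml : 'M[C]_d) (X : 'M[C]_(d * k)) :
  \tr (Bm Ml X) = \tr (Ml *m ptraceK X).
Proof.
rewrite /mxtrace.
under eq_bigr => a _ do rewrite mxE.
under [RHS]eq_bigr => i _ do rewrite mxE.
under [RHS]eq_bigr => i _ do under eq_bigr => j _ do rewrite mxE mulr_sumr.
rewrite exchange_big; under eq_bigr => i _ do rewrite exchange_big.
rewrite [RHS]exchange_big; apply: eq_bigr => i _; apply: eq_bigr => j _.
by apply: eq_bigr => a _.
Qed.

Lemma sum_Bm d k (M : 'I_d -> 'M[C]_d) (X : 'M[C]_(d * k)) :
  \sum_l M l = 1%:M -> \sum_l Bm (M l) X = ptraceH X.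
Proof.
move=> hM; apply/matrixP => a b; rewrite summxE !mxE.
under eq_bigr => l _ do rewrite mxE.
rewrite exchange_big; apply: eq_bigr => i _; rewrite exchange_big.
rewrite (sum_only (a := i)); last first.
  move=> j nj; rewrite -mulr_suml.
  have -> : \sum_l M l j i = (\sum_l M l) j i by rewrite summxE.
  by rewrite hM mxE (negbTE nj) mul0r.
rewrite -mulr_suml.
have -> : \sum_l M l i i = (\sum_l M l) i i by rewrite summxE.
by rewrite hM mxE eqxx mul1r.
Qed.

Lemma psd_Bm d k (Ml : 'M[C]_d) (X : 'M[C]_(d * k)) :
  psdmx Ml -> psdmx X -> psdmx (Bm Ml X).
Proof.
move=> pM pX v.
pose Y : 'M[C]_d := \matrix_(i, j) \sum_a \sum_b
    (v a 0)^* * X (mxtens_index (i, a)) (mxtens_index (j, b)) * v b 0.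
have pY : psdmx Y.
  move=> u; pose w : 'cV[C]_(d * k) :=
    \col_r (u (mxtens_unindex r).1 0 * v (mxtens_unindex r).2 0).
  have -> : (adjmx u *m Y *m u) 0 0 = (adjmx w *m X *m w) 0 0.
    rewrite qf_tens qfE; apply: eq_bigr => i _.
    under eq_bigr => j _ do rewrite mxE mulr_sumr mulr_suml.
    rewrite exchange_big; apply: eq_bigr => a _; apply: eq_bigr => j _.
    rewrite mulr_sumr mulr_suml; apply: eq_bigr => b _.
    by rewrite !mxE !mxtens_indexK /= rmorphM /=; ring.
  exact: pX.
have -> : (adjmx v *m Bm Ml X *m v) 0 0 = \tr (Ml *m Y).
  rewrite qfE /mxtrace.
  under eq_bigr => a _ do under eq_bigr => b _ do
    rewrite mxE mulr_sumr mulr_suml.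
  under [RHS]eq_bigr => j _ do rewrite mxE.
  under [RHS]eq_bigr => j _ do under eq_bigr => i _ do rewrite mxE mulr_sumr.
  under [RHS]eq_bigr => j _ do under eq_bigr => i _ do under eq_bigr => a _ do
    rewrite mulr_sumr.
  under eq_bigr => a _ do under eq_bigr => b _ do under eq_bigr => i _ do
    rewrite mulr_sumr mulr_suml.
  (* LHS : a b i j ; RHS : j i a b *)
  under eq_bigr => a _ do rewrite exchange_big.
  under eq_bigr => a _ do under eq_bigr => i _ do rewrite exchange_big.
  rewrite exchange_big.
  under eq_bigr => i _ do rewrite exchange_big.
  under eq_bigr => i _ do under eq_bigr => j _ do rewrite exchange_big.
  rewrite exchange_big; apply: eq_bigr => j _; apply: eq_bigr => i _.
  rewrite exchange_big; apply: eq_bigr => a _; apply: eq_bigr => b _; ring.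
exact: trpos.
Qed.
Lemma cp_psd k (f : 'M[C]_k -> 'M[C]_k) : linmap f -> compos f ->
  forall X, psdmx X -> psdmx (f X).
Proof.
move=> lf cf X pX.
pose X1 : 'M[C]_(1 * k) := \matrix_(r, s) X (mxtens_unindex r).2 (mxtens_unindex s).2.
have pX1 : psdmx X1.
  move=> w; pose v : 'cV[C]_k := \col_a w (mxtens_index (ord0, a)) 0.
  have -> : (adjmx w *m X1 *m w) 0 0 = (adjmx v *m X *m v) 0 0.
    rewrite qf_tens qfE big_ord1; apply: eq_bigr => a _.
    rewrite big_ord1; apply: eq_bigr => b _.
    by rewrite !mxE !mxtens_indexK.
  exact: pX.
have e : tensmap (@id 'M[C]_1) f X1 = delta_mx ord0 ord0 *t f X.
  rewrite /tensmap !big_ord1 (lin_expand lf X) tens_sumr; apply: eq_bigr => a _.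
  rewrite tens_sumr; apply: eq_bigr => b _.
  by rewrite tensZr !mxE !mxtens_indexK.
have := cf 1%N X1 pX1; rewrite e => pT v.
pose w : 'cV[C]_(1 * k) := \col_r v (mxtens_unindex r).2 0.
have := pT w; congr (_ <= _).
rewrite qf_tens qfE big_ord1; apply: eq_bigr => a _.
rewrite big_ord1; apply: eq_bigr => b _.
by rewrite tensmxE !mxE !mxtens_indexK /= mulr1n mul1r.
Qed.

Lemma chan_density k (f : 'M[C]_k -> 'M[C]_k) : qchannel f ->
  forall X, density X -> density (f X).
Proof.
by move=> [lf cf tf] X [pX tX]; split; [apply: cp_psd | rewrite tf].
Qed.
Section Blocks.
Variables (d k : nat) (e : 'I_d -> 'cV[C]_d).
Hypothesis Heon : forall i j : 'I_d, adjmx (e i) *m e j = (i == j)%:R%:M.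

Definition Um : 'M[C]_d := \matrix_(i, l) e l i 0.

Lemma Um_adjU : adjmx Um *m Um = 1%:M.
Proof.
apply/matrixP => l l'; have := Heon l l' => /matrixP /(_ 0 0).
rewrite !mxE eqxx mulr1n => <-; apply: eq_bigr => i _; by rewrite !mxE.
Qed.

Lemma Um_Uadj : Um *m adjmx Um = 1%:M.
Proof. by apply: mulmx1C; apply: Um_adjU. Qed.

Lemma delta_split n (l : 'I_n) :
  delta_mx l l = (delta_mx l 0 : 'cV[C]_n) *m (delta_mx 0 l : 'rV[C]_n).
Proof. by rewrite mul_delta_mx. Qed.

Lemma mx_delta_entry n p q (A : 'M[C]_(p, n)) (B : 'M[C]_(n, q)) l i j :
  (A *m delta_mx l l *m B) i j = A i l * B l j.
Proof.
rewrite delta_split mulmxA -colE -mulmxA -rowE !mxE big_ord1 !mxE //.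
Qed.

Lemma proj_U l : e l *m adjmx (e l) = Um *m delta_mx l l *m adjmx Um.
Proof.
apply/matrixP => i j; rewrite mx_delta_entry !mxE big_ord1 !mxE //.
Qed.

Lemma vN_qc (c : 'I_d -> C) :
  vN_entropy (\sum_l c l *: (e l *m adjmx (e l))) = - \sum_l entf (c l).
Proof.
have -> : \sum_l c l *: (e l *m adjmx (e l)) =
    Um *m diag_mx (\row_l c l) *m adjmx Um.
  apply/matrixP => i j; rewrite summxE mul_mx_diag !mxE.
  apply: eq_bigr => l _; rewrite [LHS]mxE proj_U mx_delta_entry !mxE; ring.
rewrite vN_trig ?diag_mx_is_trig ?Um_Uadj //; congr (- _).
by apply: eq_bigr => l _; rewrite !mxE eqxx mulr1n.
Qed.

Lemma sum_delta1 : \sum_l (delta_mx l l : 'M[C]_d) = 1%:M.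
Proof.
apply/matrixP => i j; rewrite summxE !mxE (sum_only (a := i)).
  by rewrite !mxE eqxx /= eq_sym.
by move=> l /negbTE nl; rewrite !mxE eq_sym nl.
Qed.

Lemma dd_cond (l l' : 'I_d) :
  delta_mx l l *m delta_mx l' l' = (delta_mx l l' : 'M[C]_d) *+ (l == l').
Proof. by rewrite mul_delta_mx_cond. Qed.

Lemma vN_block (c : 'I_d -> C) (V : 'I_d -> 'M[C]_k) (lam : 'I_d -> 'rV[C]_k) :
  (forall l, adjmx (V l) *m V l = 1%:M) ->
  vN_entropy (\sum_l (e l *m adjmx (e l)) *t
                (c l *: (adjmx (V l) *m diag_mx (lam l) *m V l))) =
  - \sum_l \sum_a entf (c l * lam l 0 a).
Proof.
move=> hV.
pose G := \sum_l (Um *m delta_mx l l) *t adjmx (V l).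
pose G' := \sum_l (delta_mx l l *m adjmx Um) *t V l.
pose t : 'rV[C]_(d * k) := \row_r (c (mxtens_unindex r).1 *
   lam (mxtens_unindex r).1 0 (mxtens_unindex r).2).
have eT : diag_mx t = \sum_m delta_mx m m *t (c m *: diag_mx (lam m)).
  apply/matrixP => r s; case: (mxtens_indexP r) => i a; case: (mxtens_indexP s) => j b.
  rewrite summxE (sum_only (a := i)); last first.
    by move=> m /negbTE nm; rewrite tensmxE !mxE eq_sym nm mul0r.
  rewrite tensmxE !mxE !mxtens_indexK /= (can_eq (@mxtens_indexK d k)) xpair_eqE.
  rewrite eqxx /= eq_sym.
  by case: (j == i); case: (a == b); rewrite /= ?mulr1n ?mulr0n ?mul1r ?mulr1 ?mulr0 ?mul0r.
have key (A : 'I_d -> 'M[C]_k) (B : 'I_d -> 'M[C]_k) (X : 'M[C]_d) (Y : 'M[C]_d) :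
    (\sum_l (X *m delta_mx l l) *t A l) *m (\sum_l (delta_mx l l *m Y) *t B l) =
    \sum_l (X *m delta_mx l l *m Y) *t (A l *m B l).
  rewrite mulmx_suml; apply: eq_bigr => l _; rewrite mulmx_sumr.
  rewrite (sum_only (a := l)); last first.
    move=> l' nl; rewrite tensmx_mul -mulmxA [delta_mx l l *m (_ *m _)]mulmxA dd_cond.
    by rewrite eq_sym (negbTE nl) mulr0n mul0mx mulmx0 tens0mx.
  rewrite tensmx_mul; congr (_ *t _); rewrite -!mulmxA.
  by rewrite [delta_mx l l *m (delta_mx l l *m Y)]mulmxA mul_delta_mx.
have GG : G *m G' = 1%:M.
  rewrite /G /G' key.
  under eq_bigr => l _ do rewrite hV.
  rewrite -tens_suml -mulmx_suml -mulmx_sumr sum_delta1 mulmx1 Um_Uadj.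
  exact: tens11.
have GTG : G *m diag_mx t *m G' = \sum_l (e l *m adjmx (e l)) *t
                (c l *: (adjmx (V l) *m diag_mx (lam l) *m V l)).
  have eT' : \sum_m delta_mx m m *t (c m *: diag_mx (lam m)) =
      \sum_m (delta_mx m m *m 1%:M) *t (c m *: diag_mx (lam m)).
    by apply: eq_bigr => m _; rewrite mulmx1.
  rewrite eT eT' /G key.
  under eq_bigr => l _ do rewrite mulmx1.
  rewrite /G' key; apply: eq_bigr => l _.
  by rewrite proj_U -scalemxAr -scalemxAl.
rewrite -GTG vN_trig ?diag_mx_is_trig //.
congr (- _); rewrite sum_tens; apply: eq_bigr => l _; apply: eq_bigr => a _.
by rewrite !mxE eqxx mulr1n !mxtens_indexK.
Qed.
End Blocks.
Lemma entf0 : entf 0 = 0.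
Proof. by rewrite /entf mul0r. Qed.

Lemma ReM_ge0 (q m : C) : 0 <= q -> 0 <= m ->
  complex.Re (q * m) = complex.Re q * complex.Re m.
Proof.
move=> /ge0C [_ ->] /ge0C [_ ->]; set a := complex.Re q; set b := complex.Re m.
by rewrite /= !mulr0 subr0.
Qed.

Lemma entf_mul (q m : C) : 0 <= q -> 0 <= m ->
  entf (q * m) = complex.Re m * entf q + complex.Re q * entf m.
Proof.
move=> q0 m0; rewrite /entf ReM_ge0 //.
have [a0 _] := ge0C q0; have [b0 _] := ge0C m0.
have [->|an] := eqVneq (complex.Re q) 0; first by rewrite !(mul0r, mulr0, addr0, add0r).
have [->|bn] := eqVneq (complex.Re m) 0; first by rewrite !(mul0r, mulr0, addr0, add0r).
have ap : 0 < complex.Re q by rewrite lt0r an.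
have bp : 0 < complex.Re m by rewrite lt0r bn.
rewrite lnM ?posrE //; ring.
Qed.

Lemma pd_psd n (A : 'M[C]_n) : pdmx A -> psdmx A.
Proof.
move=> pA v; have [->|vn] := eqVneq v 0.
  by rewrite mulmx0 mxE.
exact: order.Order.POrderTheory.ltW (pA v vn).
Qed.

Lemma psd_tr_ge0 n (A : 'M[C]_n) : psdmx A -> 0 <= \tr A.
Proof.
by move=> pA; apply: sumr_ge0 => i _; rewrite -qf_delta; apply: pA.
Qed.

Lemma ptraceK_lin d k N (c : 'I_N -> C) (X : 'I_N -> 'M[C]_(d * k)) :
  ptraceK (\sum_j c j *: X j) = \sum_j c j *: ptraceK (X j).
Proof.
apply/matrixP => i i'; rewrite !mxE summxE.
under eq_bigr => a _ do rewrite summxE.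
rewrite exchange_big; apply: eq_bigr => j _; rewrite !mxE mulr_sumr.
by apply: eq_bigr => a _; rewrite mxE.
Qed.

Lemma ptraceH_lin d k N (c : 'I_N -> C) (X : 'I_N -> 'M[C]_(d * k)) :
  ptraceH (\sum_j c j *: X j) = \sum_j c j *: ptraceH (X j).
Proof.
apply/matrixP => i i'; rewrite !mxE summxE.
under eq_bigr => a _ do rewrite summxE.
rewrite exchange_big; apply: eq_bigr => j _; rewrite !mxE mulr_sumr.
by apply: eq_bigr => a _; rewrite mxE.
Qed.
Lemma mxtrace_sum n (I : finType) (F : I -> 'M[C]_n) :
  \tr (\sum_i F i) = \sum_i \tr (F i).
Proof.
rewrite /mxtrace exchange_big; apply: eq_bigr => j _; by rewrite summxE.
Qed.

Section Main.
Variables (d k : nat) (M : 'I_d -> 'M[C]_d) (e : 'I_d -> 'cV[C]_d).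
Hypothesis HMpos : forall j, pdmx (M j).
Hypothesis HMsum : \sum_(j < d) M j = 1%:M.
Hypothesis Heon : forall i j : 'I_d, adjmx (e i) *m e j = (i == j)%:R%:M.
Variable Omega : 'M[C]_k -> 'M[C]_k.
Hypothesis HOmega : qchannel Omega.

Definition qv (s : 'M[C]_(d * k)) l := \tr (M l *m @ptraceK R d k s).
Definition tauv (s : 'M[C]_(d * k)) l :=
  if qv s l == 0 then @ptraceH R d k s else (qv s l)^-1 *: Bm (M l) s.

Lemma qv_ge0 s l : density s -> 0 <= qv s l.
Proof.
move=> [ps _]; rewrite /qv -tr_Bm; apply: psd_tr_ge0.
by apply: psd_Bm => //; apply: pd_psd.
Qed.

Lemma qv_sum s : density s -> \sum_l qv s l = 1.
Proof.
move=> [_ ts]; rewrite /qv -mxtrace_sum -mulmx_suml HMsum mul1mx.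
by rewrite tr_ptraceK.
Qed.

Lemma ptraceH_density s : density s -> density (@ptraceH R d k s).
Proof.
move=> ds; have [ps _] := ds; split.
  rewrite -(sum_Bm s HMsum); apply: psd_sum => l.
  by apply: psd_Bm => //; apply: pd_psd.
rewrite -(sum_Bm s HMsum) mxtrace_sum -(qv_sum ds); apply: eq_bigr => l _.
by rewrite tr_Bm.
Qed.

Lemma B_eq s l : density s -> Bm (M l) s = qv s l *: tauv s l.
Proof.
move=> ds; have [ps _] := ds; rewrite /tauv.
have [q0|qn] := eqVneq (qv s l) 0.
  rewrite q0 scale0r; apply: psd_tr0; first by apply: psd_Bm => //; apply: pd_psd.
  by rewrite tr_Bm.
by rewrite scalerA mulfV // scale1r.
Qed.

Lemma tau_density s l : density s -> density (tauv s l).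
Proof.
move=> ds; have [ps _] := ds; rewrite /tauv.
have [q0|qn] := eqVneq (qv s l) 0; first exact: ptraceH_density.
split; last by rewrite mxtraceZ tr_Bm -/(qv s l) mulVf.
apply: psdZ; first by rewrite invr_ge0; apply: qv_ge0.
by apply: psd_Bm => //; apply: pd_psd.
Qed.

Lemma per_sigma s : density s ->
  vN_entropy (tensmap (qcmap M e) Omega s) =
  vN_entropy (qcmap M e (@ptraceK R d k s)) +
  \sum_l complex.Re (qv s l) * vN_entropy (Omega (tauv s l)).
Proof.
move=> ds; have [lO cO tO] := HOmega.
have dO l : density (Omega (tauv s l)) by apply: chan_density => //; apply: tau_density.
have [VL hVL] := fin_all_exists (fun l => psd_spec (proj1 (dO l))).
have [lamL hL] := fin_all_exists hVL.
rewrite (tensmap_qc _ _ lO).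
under eq_bigr => l _ do rewrite (B_eq l ds) (linZ lO).
have eO l : Omega (tauv s l) = adjmx (VL l) *m diag_mx (lamL l) *m VL l.
  by have [_ _ -> _] := hL l.
under eq_bigr => l _ do rewrite eO.
rewrite (vN_block Heon) ?(fun l => let: And4 _ h _ _ := hL l in h) //; last first.
  by move=> l; have [_ h _ _] := hL l.
rewrite /qcmap (vN_qc Heon).
have vO l : vN_entropy (Omega (tauv s l)) = - \sum_a entf (lamL l 0 a).
  rewrite eO vN_trig ?diag_mx_is_trig //; last by have [_ h _ _] := hL l.
  by congr (- _); apply: eq_bigr => a _; rewrite mxE eqxx mulr1n.
have sl l : \sum_a complex.Re (lamL l 0 a) = 1.
  rewrite -Re_sum.
  have -> : \sum_a lamL l 0 a = \tr (Omega (tauv s l)).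
    rewrite eO mxtrace_mulC mulmxA; have [-> _ _ _] := hL l.
    by rewrite mul1mx /mxtrace; apply: eq_bigr => a _; rewrite mxE eqxx mulr1n.
  by have [_ ->] := dO l.
have -> : \sum_l entf (\tr (M l *m @ptraceK R d k s)) = \sum_l entf (qv s l) by [].
rewrite -!sumrN -big_split /=; apply: eq_bigr => l _.
have em a : entf (qv s l * lamL l 0 a) =
    complex.Re (lamL l 0 a) * entf (qv s l) + complex.Re (qv s l) * entf (lamL l 0 a).
  by apply: entf_mul; [apply: qv_ge0 | have [_ _ _ h] := hL l].
under eq_bigr => a _ do rewrite em.
rewrite vO big_split /= -mulr_suml sl mul1r -mulr_sumr; ring.
Qed.
End Main.
Lemma Hchan_le m n (Psi : 'M[C]_m -> 'M[C]_n) (s : 'M[C]_m) (x : R) :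
  (forall X, density X -> 0 <= vN_entropy (Psi X)) ->
  (exists (N : nat) (pi : 'I_N -> R) (sj : 'I_N -> 'M[C]_m),
        [/\ forall j, 0 <= pi j,
            \sum_(j < N) pi j = 1,
            forall j, density (sj j),
            s = \sum_(j < N) (Complex (pi j) 0) *: sj j &
            x = \sum_(j < N) pi j * vN_entropy (Psi (sj j))]) ->
  Hchan Psi s <= x.
Proof.
move=> hge hx; rewrite /Hchan; apply: ge_inf => //.
exists 0 => y [N [pi [sj [p0 _ dsj _ ->]]]].
by apply: sumr_ge0 => j _; apply: mulr_ge0 => //; apply: hge.
Qed.

Lemma vN_qc_ge0 d (M : 'I_d -> 'M[C]_d) (e : 'I_d -> 'cV[C]_d) :
  (forall j, pdmx (M j)) -> \sum_(j < d) M j = 1%:M ->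
  (forall i j : 'I_d, adjmx (e i) *m e j = (i == j)%:R%:M) ->
  forall X, density X -> 0 <= vN_entropy (qcmap M e X).
Proof.
move=> HMpos HMsum Heon X [pX tX]; rewrite /qcmap (vN_qc Heon).
rewrite oppr_ge0; apply: sumr_le0 => l _.
have t0 j : 0 <= \tr (M j *m X) by apply: trpos => //; apply: pd_psd.
apply: entf_le0 => //.
have <- : \sum_j \tr (M j *m X) = 1 by rewrite -mxtrace_sum -mulmx_suml HMsum mul1mx.
by rewrite (bigD1 l) //= lerDl; apply: sumr_ge0.
Qed.

Lemma realC_mul (a b : R) : (Complex (a * b) 0 : C) = (Complex a 0) * (Complex b 0).
Proof. by apply/eqP; rewrite eq_complex /= !(mulr0, mul0r, subr0, addr0) !eqxx. Qed.
End Helpers.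

Unset Implicit Arguments.

Theorem theorem5 (R : realType) (d k : nat)
  (M : 'I_d -> 'M[R[i]]_d) (e : 'I_d -> 'cV[R[i]]_d)
  (HMpos : forall j, pdmx (M j))
  (HMsum : \sum_(j < d) M j = 1%:M)
  (Heon : forall i j : 'I_d, adjmx (e i) *m e j = (i == j)%:R%:M)
  (Omega : 'M[R[i]]_k -> 'M[R[i]]_k) (HOmega : qchannel Omega)
  (rho : 'M[R[i]]_(d * k)) (Hrho : density rho) :
  Hchan (qcmap M e) (ptraceK rho) + Hchan Omega (ptraceH rho)
    <= Hchan (tensmap (qcmap M e) Omega) rho.
Proof.
rewrite [X in _ <= X]/Hchan; apply: lb_le_inf.
  exists (\sum_(j < 1) 1 * vN_entropy (tensmap (qcmap M e) Omega rho)).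
  exists 1%N, (fun _ => 1), (fun _ => rho); split.
  - by move=> _; apply: ler01.
  - by rewrite big_ord1.
  - by move=> _.
  - by rewrite big_ord1 scale1r.
  - by [].
move=> x [N [pi [sj [p0 ps dsj erho ->]]]].
set q := fun (r : 'I_(N * d)) => qv M (sj (mxtens_unindex r).1) (mxtens_unindex r).2.
have H1 : Hchan (qcmap M e) (ptraceK rho) <=
    \sum_m pi m * vN_entropy (qcmap M e (@ptraceK _ d k (sj m))).
  apply: Hchan_le; first exact: vN_qc_ge0.
  exists N, pi, (fun m => @ptraceK _ d k (sj m)); split => //.
    by move=> m; have [pm tm] := dsj m; split; [apply: psd_ptraceK | rewrite tr_ptraceK].
  by rewrite erho ptraceK_lin.
have H2 : Hchan Omega (ptraceH rho) <=
    \sum_m pi m * \sum_l complex.Re (qv M (sj m) l) *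
        vN_entropy (Omega (tauv M (sj m) l)).
  apply: Hchan_le.
    by move=> X dX; apply: vN_density_ge0; apply: chan_density.
  exists (N * d)%N, (fun r => pi (mxtens_unindex r).1 * complex.Re (q r)),
    (fun r => tauv M (sj (mxtens_unindex r).1) (mxtens_unindex r).2); split.
  - move=> r; apply: mulr_ge0 => //.
    by have [] := ge0C (qv_ge0 HMpos (mxtens_unindex r).2 (dsj (mxtens_unindex r).1)).
  - rewrite sum_tens -ps; apply: eq_bigr => m _; rewrite /q.
    under eq_bigr => l _ do rewrite mxtens_indexK.
    by rewrite /= -mulr_sumr -Re_sum (qv_sum HMsum (dsj m)) mulr1.
  - by move=> r; apply: (tau_density HMpos HMsum).
  - rewrite erho ptraceH_lin sum_tens; apply: eq_bigr => m _.
    rewrite -(sum_Bm (sj m) HMsum) scaler_sumr; apply: eq_bigr => l _.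
    rewrite /q !mxtens_indexK /= (B_eq HMpos l (dsj m)) scalerA realC_mul.
    by have [_ hq] := ge0C (qv_ge0 HMpos l (dsj m)); rewrite {1}hq.
  - rewrite sum_tens; apply: eq_bigr => m _; rewrite mulr_sumr.
    by apply: eq_bigr => l _; rewrite /q !mxtens_indexK /= mulrA.
apply: order.Order.POrderTheory.le_trans (lerD H1 H2) _.
rewrite -big_split /=.
under eq_bigr => m _ do rewrite -mulrDr -(per_sigma HMpos HMsum Heon HOmega (dsj m)).
exact: order.Order.POrderTheory.lexx.
Qed.
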